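(* Let $G=(V,E)$ be a directed graph on $n$ nodes in which every node has a self-loop, let $P$ be an $n\times n$ right stochastic matrix supported on the edges of $G$, let $D$ be diagonal with entries $D_{uu}=p_{uu'}\in[0,1]$, and let $\tilde P=(\mathbf I_n-D)P$. Write $p^{(t)}_{uv}=(P^t)_{uv}$ and $\tilde p^{(t)}_{uv}=(\tilde P^t)_{uv}$. Then for all $u,v\in V$ and every integer $t\ge 1$, $$(1-p_{uu'})\Big(\max_{w\in V}(1-p_{ww'})\Big)^{t-1}p^{(t)}_{uv}\;\ge\;\tilde p^{(t)}_{uv}\;\ge\;(1-p_{uu'})\Big(\min_{w\in V}(1-p_{ww'})\Big)^{t-1}p^{(t)}_{uv}.$$
   Context: $p_{uu'}$ is interpreted as the probability that a random walker at $u$ is absorbed (moves to an auxiliary absorbing node $u'$); $\tilde p^{(t)}_{uv}$ is the probability that a walker started at $u$ is at $v$ (not yet absorbed) after $t$ steps. *)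

(* Defs.v *)
From HB Require Import structures.
From mathcomp Require Import all_boot all_order all_algebra.
Set Implicit Arguments. Unset Strict Implicit. Unset Printing Implicit Defensive.
Import Order.TTheory GRing.Theory Num.Theory.
Local Open Scope ring_scope.

Definition has_self_loops n (e : rel 'I_n) : Prop := forall u, e u u.

Definition right_stochastic (R : numDomainType) n (P : 'M[R]_n) : Prop :=
  (forall u v, 0 <= P u v) /\ (forall u, \sum_(v < n) P u v = 1).

Definition supported_on (R : numDomainType) n (e : rel 'I_n) (P : 'M[R]_n) : Prop :=
  forall u v, P u v != 0 -> e u v.

(* D = diag(d), with d u = p_{uu'} *)
Definition absorb_diag (R : numDomainType) n (d : 'I_n -> R) : 'M[R]_n :=
  diag_mx (\row_u d u).

Definition Ptilde (R : numDomainType) n (d : 'I_n -> R) (P : 'M[R]_n) : 'M[R]_n :=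
  (1%:M - absorb_diag d) *m P.

(* max / min over w of (1 - d w); values lie in [0,1], so the neutral
   elements 0 and 1 do not affect the result when n > 0. *)
Definition max_stay (R : realDomainType) n (d : 'I_n -> R) : R :=
  \big[Num.max/0]_(w < n) (1 - d w).
Definition min_stay (R : realDomainType) n (d : 'I_n -> R) : R :=
  \big[Num.min/1]_(w < n) (1 - d w).

(* Main.v *)
Require Import Defs.
From HB Require Import structures.
From mathcomp Require Import all_boot all_order all_algebra.
Import Order.TTheory GRing.Theory Num.Theory.
Local Open Scope ring_scope.

Lemma Ptilde_entry (R : realFieldType) n (d : 'I_n -> R) (P : 'M[R]_n) i j :
  Ptilde d P i j = (1 - d i) * P i j.
Proof.
rewrite /Ptilde mulmxBl mul1mx /absorb_diag mul_diag_mx !mxE.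
by rewrite mulrBl mul1r.
Qed.

Lemma max_stay_ge (R : realFieldType) n (d : 'I_n -> R) w :
  1 - d w <= max_stay d.
Proof.
by rewrite /max_stay (bigD1 w) //= le_max lexx.
Qed.

Lemma max_stay_ge0 (R : realFieldType) n (d : 'I_n -> R) :
  0 <= max_stay d.
Proof.
rewrite /max_stay; elim/big_rec: _ => // i x _ hx.
by rewrite le_max hx orbT.
Qed.

Lemma min_stay_le (R : realFieldType) n (d : 'I_n -> R) w :
  min_stay d <= 1 - d w.
Proof.
by rewrite /min_stay (bigD1 w) //= ge_min lexx.
Qed.

Lemma min_stay_ge0 (R : realFieldType) n (d : 'I_n -> R) :
  (forall u, 0 <= d u <= 1) -> 0 <= min_stay d.
Proof.
move=> hd; rewrite /min_stay; elim/big_rec: _ => // i x _ hx.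
rewrite le_min hx andbT subr_ge0.
by case/andP: (hd i).
Qed.

Lemma Pexp_ge0 (R : realFieldType) n (P : 'M[R]_n) :
  (forall u v, 0 <= P u v) -> forall k u v, 0 <= (P ^+ k) u v.
Proof.
move=> hP; elim=> [|k IH] u v.
  by rewrite expr0 mxE ler0n.
rewrite exprS -mulmxE mxE; apply: sumr_ge0 => w _.
by apply: mulr_ge0.
Qed.

Theorem lemma2 (R : realFieldType) (n : nat) (e : rel 'I_n) (P : 'M[R]_n)
  (d : 'I_n -> R)
  (he : has_self_loops e) (hP : right_stochastic P) (hsupp : supported_on e P)
  (hd : forall u, 0 <= d u <= 1)
  (u v : 'I_n) (t : nat) (ht : (1 <= t)%N) :
  (1 - d u) * (max_stay d) ^+ t.-1 * (P ^+ t) u v >= (Ptilde d P ^+ t) u v /\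
  (Ptilde d P ^+ t) u v >= (1 - d u) * (min_stay d) ^+ t.-1 * (P ^+ t) u v.
Proof.
case: hP => hP0 _.
have hdu : forall w, 0 <= 1 - d w by move=> w; rewrite subr_ge0; case/andP: (hd w).
have hM := @max_stay_ge0 R n d.
have hm := @min_stay_ge0 R n d hd.
have hPk := @Pexp_ge0 R n P hP0.
case: t ht => // k _ /=.
elim: k u v => [|k IH] u v.
  by rewrite !expr1 !expr0 mulr1 Ptilde_entry lexx.
rewrite [Ptilde d P ^+ _]exprS [P ^+ k.+2]exprS -!mulmxE !mxE.
rewrite !mulr_sumr; split; apply: ler_sum => w _; rewrite Ptilde_entry.
- have [h1 _] := IH w v.
  rewrite -!mulrA; apply: ler_wpM2l; first exact: hdu.
  rewrite [X in _ <= X]mulrCA; apply: ler_wpM2l; first exact: hP0.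
  apply: (le_trans h1).
  apply: ler_wpM2r; first by rewrite -?exprS hPk.
  rewrite exprS.
  apply: ler_wpM2r; first exact: exprn_ge0.
  exact: max_stay_ge.
- have [_ h1] := IH w v.
  rewrite -!mulrA; apply: ler_wpM2l; first exact: hdu.
  rewrite [X in X <= _]mulrCA; apply: ler_wpM2l; first exact: hP0.
  apply: (le_trans _ h1).
  apply: ler_wpM2r; first by rewrite -?exprS hPk.
  rewrite exprS.
  apply: ler_wpM2r; first exact: exprn_ge0.
  exact: min_stay_le.
Qed.
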